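(* Let $L=(L^{(n)})_n$ be a family where each $L^{(n)}$ is a set of labels on $n$ qubits, with the two properties: (1) for all $\ell_1,\ell_2\in L^{(n)}$ we have $\ell_1\ell_2\notin L^{(n)}$; (2) $\lim_{n\to\infty}|L^{(n)}|/n=\infty$. Let $C=(C^{(n)})_n$ be a family of CNOT circuits for the nearest-neighbor connectivity graph such that $C^{(n)}$ generates $L^{(n)}$. Then $\mu(C,L)\geq 1+\gamma$ for some absolute constant $\gamma>0$ (independent of the families $L$ and $C$).
   Context: Qubits are indexed $1,\ldots,n$. $\mathrm{CX}_{i,j}$ ($i\neq j$) denotes the CNOT gate with control $i$ and target $j$. A CNOT circuit is a finite sequence of moments, each a set of CNOT gates acting on pairwise disjoint qubits; $\operatorname{size}(C)$ is its total number of gates. It is for the nearest-neighbor connectivity graph if every gate $\mathrm{CX}_{i,j}$ in it has $|i-j|=1$. A label is a subset of $\{1,\ldots,n\}$; for labels $a,b$, $ab$ denotes their symmetric difference. A label sequence $\ell=(\ell_1,\ldots,\ell_n)$ is acted on from the right: $\ell\,\mathrm{CX}_{i,j}$ replaces $\ell_j$ by $\ell_i\ell_j$; a moment applies its gates and a circuit applies its moments in order. With $C_{1,m}$ the first $m$ moments of $C$, $C$ generates a label set $L$ if every element of $L$ occurs as an entry of $\ell^0 C_{1,m}$ for some $m\geq 1$, where (by the paper's standing convention) the initial sequence is $\ell^0=(\{1\},\ldots,\{n\})$. $\mu(C,L)=\liminf_{n\to\infty}\operatorname{size}(C^{(n)})/|L^{(n)}|$. *)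

(* Defs.v *)
From HB Require Import structures.
From mathcomp Require Import all_boot all_order all_algebra.
From mathcomp Require Import all_classical all_reals all_analysis.
From mathcomp Require Import Rstruct.

Set Implicit Arguments.
Unset Strict Implicit.
Unset Printing Implicit Defensive.

(* Qubits are 'I_n (0-based, i.e. qubit k+1 of the paper is ordinal k). *)
Definition label (n : nat) := {set 'I_n}.

Definition symdiff (n : nat) (a b : label n) : label n := (a :\: b) :|: (b :\: a).

Definition labseq (n : nat) := {ffun 'I_n -> label n}.

(* a CNOT gate CX_{i,j} is the pair (control i, target j) *)
Definition gate (n : nat) := ('I_n * 'I_n)%type.
Definition moment (n : nat) := seq (gate n).
Definition circuit (n : nat) := seq (moment n).

Definition gate_qubits (n : nat) (g : gate n) : {set 'I_n} := [set g.1; g.2].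
Definition moment_ok (n : nat) (M : moment n) : bool :=
  all (fun g : gate n => g.1 != g.2) M &&
  pairwise (fun g h : gate n => [disjoint gate_qubits g & gate_qubits h]) M.

Definition nn_gate (n : nat) (g : gate n) : bool :=
  ((g.1 : nat).+1 == g.2) || ((g.2 : nat).+1 == g.1).

Definition nn_circuit (n : nat) (C : circuit n) : bool :=
  all (fun M => moment_ok M && all (@nn_gate n) M) C.

Definition csize (n : nat) (C : circuit n) : nat := sumn (map size C).

Definition apply_gate (n : nat) (l : labseq n) (g : gate n) : labseq n :=
  [ffun k => if k == g.2 then symdiff (l g.1) (l g.2) else l k].
Definition apply_moment (n : nat) (l : labseq n) (M : moment n) : labseq n :=
  foldl (@apply_gate n) l M.
Definition apply_circuit (n : nat) (l : labseq n) (C : circuit n) : labseq n :=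
  foldl (@apply_moment n) l C.

Definition init_labseq (n : nat) : labseq n := [ffun i => [set i]].

Definition generates (n : nat) (C : circuit n) (L : {set label n}) : Prop :=
  forall x, x \in L ->
    exists m : nat, (1 <= m)%N /\ (m <= size C)%N /\
      exists k : 'I_n, apply_circuit (init_labseq n) (take m C) k = x.

Definition symdiff_free (n : nat) (L : {set label n}) : Prop :=
  forall l1 l2, l1 \in L -> l2 \in L -> symdiff l1 l2 \notin L.

Definition superlinear (L : forall n : nat, {set label n}) : Prop :=
  forall M : nat, exists N : nat, forall n : nat, (N <= n)%N -> (M * n <= #|L n|)%N.

Definition mu (C : forall n : nat, circuit n) (L : forall n : nat, {set label n})
  : \bar Rdefinitions.R :=
  limn_einf (fun n : nat =>
    (((csize (C n))%:R / (#|L n|)%:R : Rdefinitions.R)%R)%:E).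

(* Main.v *)
Require Import Defs.
From HB Require Import structures.
From mathcomp Require Import all_boot all_order all_algebra.
From mathcomp Require Import all_classical all_reals all_analysis.
From mathcomp Require Import Rstruct.
From mathcomp Require Import zify.
From mathcomp Require Import lra.
Import Order.TTheory GRing.Theory Num.Theory.

Module CombM.
Import fintype finset.
Section Comb.
Variable n : nat.
Variable L : {set label n}.
Hypothesis Lfree : symdiff_free L.
Implicit Types (st : labseq n) (S : {set label n}) (j k t c : 'I_n).

Lemma inSD (a b : label n) x : (x \in symdiff a b) = (x \in a) (+) (x \in b).
Proof. by rewrite /symdiff !inE; case: (x \in a); case: (x \in b). Qed.

Definition nbval (st : labseq n) (k : 'I_n) : label n := if st k \in L then finset.set0 else st k.
Definition nbvn (st : labseq n) (m : nat) : label n :=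
  if @insub nat (fun x => x < n) 'I_n m is Some k then nbval st k else finset.set0.
Definition lv (st : labseq n) (j : 'I_n) : label n :=
  if (j : nat) is m.+1 then nbvn st m else finset.set0.
Definition rv (st : labseq n) (j : 'I_n) : label n := nbvn st j.+1.
Definition Rset (st : labseq n) (j : 'I_n) : {set label n} :=
  [set x in [:: st j; symdiff (st j) (lv st j); symdiff (st j) (rv st j);
                symdiff (symdiff (st j) (lv st j)) (rv st j)]].
Definition fpot (st : labseq n) (S : {set label n}) (j : 'I_n) : nat :=
  if st j \in L then #|Rset st j :\: S| else 13.
Definition Phi st S := \sum_(j < n) fpot st S j.

Lemma Rset_card st j : #|Rset st j| <= 4.
Proof. by rewrite cardsE (leq_trans (card_size _)). Qed.

Lemma fpot_le13 st S j : fpot st S j <= 13.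
Proof.
rewrite /fpot; case: ifP => // _.
by rewrite (leq_trans (subset_leq_card (subsetDl _ _))) // (leq_trans (Rset_card _ _)).
Qed.

Lemma fpot_good st S j : st j \in L -> fpot st S j <= 4.
Proof.
by rewrite /fpot => ->; rewrite (leq_trans (subset_leq_card (subsetDl _ _))) // Rset_card.
Qed.

Lemma fpot_monoS st S S' j : S \subset S' -> fpot st S' j <= fpot st S j.
Proof.
move=> sS; rewrite /fpot; case: ifP => // _.
by apply: subset_leq_card; apply: finset.setDS.
Qed.


Lemma sdC (a b : label n) : symdiff a b = symdiff b a.
Proof. by apply/setP => x; rewrite !inSD addbC. Qed.
Lemma sd1 (l v : label n) : symdiff (symdiff l v) l = v.
Proof. by apply/setP => x; rewrite !inSD; case: (x \in l); case: (x \in v). Qed.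
Lemma sd2 (l v r : label n) : symdiff (symdiff l v) r = symdiff (symdiff v l) r.
Proof. by rewrite (sdC l v). Qed.
Lemma sd3 (l v r : label n) : symdiff (symdiff (symdiff l v) l) r = symdiff v r.
Proof. by rewrite sd1. Qed.
Lemma sd4 (r v l : label n) : symdiff (symdiff r v) l = symdiff (symdiff v l) r.
Proof. by apply/setP => x; rewrite !inSD; case: (x \in l); case: (x \in v); case: (x \in r). Qed.
Lemma sd5 (r v l : label n) : symdiff (symdiff (symdiff r v) l) r = symdiff v l.
Proof. by apply/setP => x; rewrite !inSD; case: (x \in l); case: (x \in v); case: (x \in r). Qed.

Lemma Rsub (v l r a : label n) : a = l \/ a = r ->
  [set x in [:: symdiff a v; symdiff (symdiff a v) l; symdiff (symdiff a v) r;
                symdiff (symdiff (symdiff a v) l) r]]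
  \subset [set x in [:: v; symdiff v l; symdiff v r; symdiff (symdiff v l) r]].
Proof.
move=> [->|->]; apply/subsetP => y; rewrite !inE => /or4P [] /eqP ->.
- by rewrite (sdC l v) eqxx ?orbT.
- by rewrite sd1 eqxx ?orbT.
- by rewrite sd2 eqxx ?orbT.
- by rewrite sd3 eqxx ?orbT.
- by rewrite (sdC r v) eqxx ?orbT.
- by rewrite sd4 eqxx ?orbT.
- by rewrite sd1 eqxx ?orbT.
- by rewrite sd5 eqxx ?orbT.
Qed.

Lemma nbvn_eq st1 st2 m :
  (forall k, val k = m -> nbval st1 k = nbval st2 k) -> nbvn st1 m = nbvn st2 m.
Proof. by move=> H; rewrite /nbvn; case: insubP => // k _ Ek; apply: H. Qed.

Lemma nbvn_ord st k : nbvn st k = nbval st k.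
Proof. by rewrite /nbvn; case: insubP => [k' _ /val_inj -> //|]; rewrite ltn_ord. Qed.

Lemma fpot_local st1 st2 S j :
  (forall k, (k.+1 == j) || (j.+1 == k) -> nbval st1 k = nbval st2 k) ->
  st1 j = st2 j -> fpot st1 S j = fpot st2 S j.
Proof.
move=> H E.
have El : lv st1 j = lv st2 j.
  rewrite /lv; case Ej: (j : nat) => [|m] //; apply: nbvn_eq => k Ek; apply: H.
  by rewrite Ek Ej eqxx.
have Er : rv st1 j = rv st2 j.
  by rewrite /rv; apply: nbvn_eq => k Ek; apply: H; rewrite Ek eqxx orbT.
by rewrite /fpot /Rset El Er E.
Qed.

Lemma sum_le1 (p : nat -> bool) : (forall a b, p a -> p b -> a = b) ->
  \sum_(j < n) (p j : nat) <= 1.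
Proof.
move=> H.
rewrite (eq_bigr (fun j : 'I_n => if p j then 1 else 0)); last by move=> j _; case: (p j).
rewrite -big_mkcond sum1dep_card; apply/card_le1_eqP => x y; rewrite !inE => px py.
by apply: val_inj; apply: H.
Qed.

Definition outg st (g : gate n) : label n := symdiff (st g.1) (st g.2).

Lemma agE st (g : gate n) k :
  apply_gate st g k = if k == g.2 then outg st g else st k.
Proof. by rewrite /apply_gate ffunE. Qed.

Lemma fpot_other st S (g : gate n) j : j != g.2 ->
  fpot (apply_gate st g) (outg st g |: S) j <=
  fpot st S j + 4 * ((j.+1 == g.2) + (g.2.+1 == j)).
Proof.
move=> jt; have Ej : apply_gate st g j = st j by rewrite agE (negbTE jt).
case adj: ((j.+1 == g.2) || (g.2.+1 == j)).
- case jL: (st j \in L).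
  + have H4 : fpot (apply_gate st g) (outg st g |: S) j <= 4 by apply: fpot_good; rewrite Ej.
    apply: leq_trans H4 _.
    have : 0 < (j.+1 == g.2) + (g.2.+1 == j).
      by move/orP: adj => [] ->; rewrite ?addn1 ?add1n.
    move: ((j.+1 == g.2) + (g.2.+1 == j)) => x; lia.
  + by rewrite /fpot Ej jL leq_addr.
- apply: leq_trans _ (leq_addr _ _).
  have HS : S \subset outg st g |: S by apply/subsetP => y yS; rewrite !inE yS orbT.
  apply: leq_trans (fpot_monoS _ _ _ _ HS) _.
  apply: eq_leq; apply: fpot_local Ej => k kj.
  rewrite /nbval agE; case: eqP => // Ek; exfalso.
  by rewrite Ek orbC adj in kj.
Qed.

Lemma sum_ne_le (t : 'I_n) (F : 'I_n -> nat) :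
  \sum_(j < n | j != t) F j <= \sum_(j < n) F j.
Proof. by rewrite [X in _ <= X](bigD1 t) //= leq_addl. Qed.

Lemma adj_sum (t : 'I_n) :
  \sum_(j < n | j != t) 4 * ((j.+1 == t) + (t.+1 == j)) <= 8.
Proof.
rewrite -big_distrr /= -[8]/(4 * 2) leq_mul2l /=.
apply: leq_trans (sum_ne_le t _) _; rewrite big_split /=.
have H1 := @sum_le1 (fun m => m.+1 == t) _.
have H2 := @sum_le1 (fun m => t.+1 == m) _.
rewrite -[2]/(1 + 1) leq_add //.
- apply: H1 => a b /eqP Ha /eqP Hb; apply/succn_inj; by rewrite Ha Hb.
- by apply: H2 => a b /eqP <- /eqP <-.
Qed.

Lemma step st S (g : gate n) : nn_gate g ->
  Phi (apply_gate st g) (outg st g |: S) +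
    22 * ((outg st g \in L) && (outg st g \notin S)) <= Phi st S + 21.
Proof.
move=> nng.
set st' := apply_gate st g; set o := outg st g; set S' := o |: S.
have HS : S \subset S' by apply/subsetP => y yS; rewrite !inE yS orbT.
have E' : Phi st' S' = fpot st' S' g.2 + \sum_(j < n | j != g.2) fpot st' S' j.
  by rewrite /Phi (bigD1 g.2).
have E : Phi st S = fpot st S g.2 + \sum_(j < n | j != g.2) fpot st S j.
  by rewrite /Phi (bigD1 g.2).
have Hsum : \sum_(j < n | j != g.2) fpot st' S' j <=
            \sum_(j < n | j != g.2) fpot st S j + 8.
  have H : \sum_(j < n | j != g.2) fpot st' S' j <= \sum_(j < n | j != g.2)
     (fpot st S j + 4 * ((j.+1 == g.2) + (g.2.+1 == j))).
    by apply: leq_sum => j jt; exact: fpot_other.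
  by apply: (leq_trans H); rewrite big_split /= leq_add2l adj_sum.
have Ht : st' g.2 = o by rewrite /st' agE eqxx.
have F13 := fpot_le13 st' S' g.2.
case P: ((o \in L) && (o \notin S)); last first.
  rewrite muln0 addn0 E' E; lia.
move/andP: P => [oL oS]; rewrite muln1 E' E.
case tL: (st g.2 \in L); last first.
  have F4 : fpot st' S' g.2 <= 4 by apply: fpot_good; rewrite Ht.
  have F13' : fpot st S g.2 = 13 by rewrite /fpot tL.
  lia.
have cL : st g.1 \notin L.
  by apply/negP => cL; have := Lfree _ _ cL tL; rewrite -/(outg st g) -/o oL.
have nbt : forall k, nbval st' k = nbval st k.
  by move=> k; rewrite /nbval /st' agE; case: eqP => // ->; rewrite -/o oL tL.
have Hsum2 : \sum_(j < n | j != g.2) fpot st' S' j <=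
             \sum_(j < n | j != g.2) fpot st S j.
  apply: leq_sum => j jt; apply: leq_trans (fpot_monoS _ _ _ _ HS) _.
  apply: eq_leq; apply: fpot_local => [k _|]; first exact: nbt.
  by rewrite /st' agE (negbTE jt).
have Hlv : lv st' g.2 = lv st g.2.
  by rewrite /lv; case: (g.2 : nat) => // m; apply: nbvn_eq => k _; exact: nbt.
have Hrv : rv st' g.2 = rv st g.2.
  by rewrite /rv; apply: nbvn_eq => k _; exact: nbt.
have aLR : st g.1 = lv st g.2 \/ st g.1 = rv st g.2.
  move: nng; rewrite /nn_gate => /orP [] /eqP E1.
  - by left; rewrite /lv -E1 nbvn_ord /nbval (negbTE cL).
  - by right; rewrite /rv E1 nbvn_ord /nbval (negbTE cL).
have Rsb : Rset st' g.2 \subset Rset st g.2.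
  by rewrite /Rset Hlv Hrv Ht /o /outg; apply: Rsub.
have oR : o \in Rset st g.2.
  rewrite /o /outg /Rset; case: aLR => ->; rewrite !inE (sdC _ (st g.2)) eqxx ?orbT //.
have fpt : fpot st' S' g.2 < fpot st S g.2.
  rewrite /fpot Ht oL tL; apply: proper_card; rewrite properE; apply/andP; split.
  - apply/subsetP => y; rewrite finset.in_setD => /andP [yS' yR].
    move: yS'; rewrite finset.in_setU1 negb_or => /andP [_ yS].
    by rewrite finset.in_setD yS /=; apply: (subsetP Rsb).
  - apply/subsetPn; exists o; first by rewrite finset.in_setD oS oR.
    by rewrite finset.in_setD finset.in_setU1 eqxx.
lia.
Qed.


Fixpoint run_cnt st S (s : seq (gate n)) : nat :=
  if s is g :: s' then
    ((outg st g \in L) && (outg st g \notin S)) + run_cnt (apply_gate st g) (outg st g |: S) s'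
  else 0.
Fixpoint seenF st S (s : seq (gate n)) : {set label n} :=
  if s is g :: s' then seenF (apply_gate st g) (outg st g |: S) s' else S.

Lemma cnt_phi s : forall st S, all (@nn_gate n) s ->
  22 * run_cnt st S s <= Phi st S + 21 * size s.
Proof.
elim: s => [|g s IH] st S /=; first by rewrite muln0.
move=> /andP [ng ns].
have := step st S g ng; have := IH (apply_gate st g) (outg st g |: S) ns.
move: (run_cnt _ _ _) (Phi (apply_gate st g) _) (Phi st S) (nat_of_bool _) (size s) => a b c d e; lia.
Qed.

Lemma seen_mono s : forall st S, S \subset seenF st S s.
Proof.
elim: s => [|g s IH] st S /=; first exact: subxx.
apply: subset_trans _ (IH _ _); apply/subsetP => y yS; by rewrite !inE yS orbT.
Qed.

Lemma cnt_L s : forall st S, #|L :&: seenF st S s| <= #|L :&: S| + run_cnt st S s.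
Proof.
elim: s => [|g s IH] st S /=; first by rewrite addn0.
apply: leq_trans (IH _ _) _; rewrite addnA leq_add2r.
set o := outg st g.
case P: ((o \in L) && (o \notin S)).
- apply: leq_trans (subset_leq_card (_ : _ \subset o |: (L :&: S))) _.
    by apply/subsetP => y; rewrite !inE => /andP [-> /orP [->|->]]; rewrite ?orbT.
  by rewrite cardsU1 addnC leq_add2l leq_b1.
- rewrite addn0; apply: subset_leq_card; apply/subsetP => y.
  rewrite !inE => /andP [yL /orP [/eqP Ey|yS]]; last by rewrite yL yS.
  by move: P; rewrite -Ey yL /= => /negbFE ->.
Qed.

Lemma prefix_seen p q : forall st S k, (forall k, st k \in S) ->
  foldl (@apply_gate n) st p k \in seenF st S (p ++ q).
Proof.
elim: p => [|g p IH] st S k H /=; first exact: (subsetP (seen_mono _ _ _)).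
apply: IH => k'; rewrite agE; case: eqP => _; rewrite !inE ?eqxx //.
by rewrite H orbT.
Qed.

Lemma ac_flat (l : labseq n) (ss : circuit n) :
  apply_circuit l ss = foldl (@apply_gate n) l (flatten ss).
Proof.
elim: ss l => [|M ss IH] l //=.
by rewrite /apply_circuit /= -/(apply_circuit _ _) IH foldl_cat.
Qed.

Lemma bound (C : circuit n) : nn_circuit C -> generates C L ->
  22 * #|L| <= 21 * csize C + 35 * n.
Proof.
move=> HC HG.
set s := flatten C.
have ns : all (@nn_gate n) s.
  apply/allP => g /flattenP [M MC gM].
  by move: (allP HC M MC) => /andP [_ /allP]; apply.
have sz : csize C = size s by rewrite /csize /s size_flatten.
set S0 := [set init_labseq n k | k in 'I_n].
have S0n : #|S0| <= n by apply: leq_trans (leq_imset_card _ _) _; rewrite card_ord.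
have init_in : forall k, init_labseq n k \in S0 by move=> k; apply: imset_f.
have Lsub : L \subset seenF (init_labseq n) S0 s.
  apply/subsetP => x xL; have [m [m1 [mC [k Hk]]]] := HG x xL.
  have Es : s = flatten (take m C) ++ flatten (drop m C).
    by rewrite -flatten_cat cat_take_drop.
  rewrite -Hk ac_flat Es; exact: prefix_seen.
have c1 : #|L| <= n + run_cnt (init_labseq n) S0 s.
  have := cnt_L s (init_labseq n) S0; rewrite (finset.setIidPl Lsub) => H.
  apply: leq_trans H _; rewrite leq_add2r.
  apply: leq_trans S0n; apply: subset_leq_card; exact: finset.subsetIr.
have c2 := @cnt_phi s (init_labseq n) S0 ns.
have c3 : Phi (init_labseq n) S0 <= 13 * n.
  apply: leq_trans (_ : \sum_(j < n) 13 <= _).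
    by apply: leq_sum => j _; exact: fpot_le13.
  by rewrite sum_nat_const card_ord mulnC.
rewrite sz; lia.
Qed.

End Comb.
End CombM.

Lemma liminf_ge (u : nat -> Rdefinitions.R) (a : Rdefinitions.R) N :
  (forall m, (N <= m)%N -> (a <= u m)%R) -> (a%:E <= limn_einf (fun n => (u n)%:E))%E.
Proof.
move=> H; rewrite limn_einf_lim; apply: (lime_ge (@is_cvg_einfs _ _)).
exists N => // m /= Nm.
apply: le_ereal_inf_tmp => _ [p /= pm] <-.
rewrite lee_fin; apply: H; exact: leq_trans pm.
Qed.

Theorem mainTheorem2 :
  exists gamma : Rdefinitions.R, (0 < gamma)%R /\
    forall (L : forall n : nat, {set label n}) (C : forall n : nat, circuit n),
      (forall n : nat, symdiff_free (L n)) ->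
      superlinear L ->
      (forall n : nat, nn_circuit (C n)) ->
      (forall n : nat, generates (C n) (L n)) ->
      ((1 + gamma)%R%:E <= mu C L)%E.
Proof.
exists (1 / 44)%R; split; first by rewrite divr_gt0 // ltr0n.
move=> L C Hfree Hsl Hnn Hgen.
have [N HN] := Hsl 67.
apply: (@liminf_ge _ _ (maxn N 1)) => m.
rewrite geq_max => /andP [Nm m1].
have H1 := HN m Nm.
have H2 := @CombM.bound m (L m) (Hfree m) (C m) (Hnn m) (Hgen m).
have Lpos : (0 < #|L m|)%N by lia.
have H3 : (45 * #|L m| <= 44 * csize (C m))%N by lia.
rewrite ler_pdivlMr ?ltr0n //.
have : (((45 * #|L m|)%N)%:R <= ((44 * csize (C m))%N)%:R :> Rdefinitions.R)%R by rewrite ler_nat.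
rewrite !natrM.
move: (#|L m|%:R : Rdefinitions.R)%R ((csize (C m))%:R : Rdefinitions.R)%R => x y.
lra.
Qed.
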